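(* For the discrete torus calculus and diagonal zweibein of the context, the antisymmetrizer $\pi=\frac12(\mathrm{id}-\tau)$ satisfies conditions (i) and (ii) (and hence defines 2-forms with $\mathrm{d}^2=0$) if and only if $\Theta_1\,R_1(\Theta_2)=\Theta_2\,R_2(\Theta_1)$, i.e. $\Theta_1\bar\partial^1\Theta_2=\Theta_2\bar\partial^2\Theta_1$.
   Context: $\Sigma=\mathbb{Z}_2\times\mathbb{Z}_2$, $x\to y$ iff $y-x\in\{(1,0),(0,1)\}$ (square connectivity), $n=2$, diagonal zweibein $e_{1,x,x+(1,0)}=\Theta_1(x)^{-1}$, $e_{2,x,x+(0,1)}=\Theta_2(x)^{-1}$ with $\Theta_a$ nowhere-vanishing, other entries $0$; inverses $e_1^{-1\,x,x+(1,0)}=\Theta_1(x)$, $e_2^{-1\,x,x+(0,1)}=\Theta_2(x)$. $R_1f(x)=f(x+(1,0))$, $R_2f(x)=f(x+(0,1))$, $\bar\partial^a=R_a-\mathrm{id}$. $F_{x,z}=\{y:x\to y\to z\}$. For $\pi(e_a\otimes e_b)=\sum\pi_{ab}{}^{cd}e_c\otimes e_d$ let $\pi_{x,z}{}^y{}_{y'}=\sum\pi_{ab}{}^{cd}e_a^{-1\,xy}e_b^{-1\,yz}e_{cxy'}e_{dy'z}$. Conditions: (i) $\sum\pi_{ab}{}^{cd}e_a^{-1\,xy}e_b^{-1\,yz}e_{cxy'}e_{dy'z'}=0$ for all $x$, $z\ne z'$, $y\in F_{x,z}$, $y'\in F_{x,z'}$; (ii) $\sum_{y\in F_{x,z}}\pi_{x,z}{}^y{}_{y'}=0$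 for all $(x,z)$ that are neither edges nor diagonal and all $y'\in F_{x,z}$. $\tau$ is the flip $e_a\otimes e_b\mapsto e_b\otimes e_a$. *)

(* Defs.v *)
From HB Require Import structures.
From mathcomp Require Import all_boot all_order all_algebra.
Set Implicit Arguments. Unset Strict Implicit. Unset Printing Implicit Defensive.
Import Order.TTheory GRing.Theory Num.Theory.
Local Open Scope ring_scope.

Definition Sigma : Type := ('Z_2 * 'Z_2)%type.

(* the two generating shifts (1,0) and (0,1); direction a : 'I_2,
   with a = 0 standing for direction 1 and a = 1 for direction 2 *)
Definition u1 : Sigma := (1%R, 0%R).
Definition u2 : Sigma := (0%R, 1%R).
Definition dir (a : 'I_2) : Sigma := if a == ord0 then u1 else u2.

Definition edge (x y : Sigma) : bool := (y - x == u1) || (y - x == u2).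

Definition F (x z : Sigma) : {set Sigma} := [set y | edge x y && edge y z].

Definition R1 {K : Type} (f : Sigma -> K) : Sigma -> K := fun x => f (x + u1).
Definition R2 {K : Type} (f : Sigma -> K) : Sigma -> K := fun x => f (x + u2).

Section Zweibein.
Variable K : numFieldType.
Variables Th1 Th2 : Sigma -> K.

Definition Th (a : 'I_2) : Sigma -> K := if a == ord0 then Th1 else Th2.

Definition zw (a : 'I_2) (x y : Sigma) : K :=
  if y - x == dir a then (Th a x)^-1 else 0.
Definition zwinv (a : 'I_2) (x y : Sigma) : K :=
  if y - x == dir a then Th a x else 0.

(* pi_{x,z}{}^y{}_{y'} (with a possibly different endpoint z' for the e's) *)
Definition picoef (pi : 'I_2 -> 'I_2 -> 'I_2 -> 'I_2 -> K)
    (x y z y' z' : Sigma) : K :=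
  \sum_(a < 2) \sum_(b < 2) \sum_(c < 2) \sum_(d < 2)
    pi a b c d * zwinv a x y * zwinv b y z * zw c x y' * zw d y' z'.

Definition cond_i (pi : 'I_2 -> 'I_2 -> 'I_2 -> 'I_2 -> K) : Prop :=
  forall x z z' y y' : Sigma, z != z' -> y \in F x z -> y' \in F x z' ->
    picoef pi x y z y' z' = 0.

Definition cond_ii (pi : 'I_2 -> 'I_2 -> 'I_2 -> 'I_2 -> K) : Prop :=
  forall x z : Sigma, ~~ edge x z -> z != x ->
    forall y', y' \in F x z -> \sum_(y in F x z) picoef pi x y z y' z = 0.
End Zweibein.

(* coefficients pi_{ab}^{cd} of pi = 1/2 (id - tau), tau the flip:
   pi (e_a (x) e_b) = sum_{cd} pi_{ab}^{cd} e_c (x) e_d *)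
Definition antisym (K : numFieldType) (a b c d : 'I_2) : K :=
  2^-1 * (((a == c) && (b == d))%:R - ((a == d) && (b == c))%:R).

(* Main.v *)
Require Import Defs.
From mathcomp Require Import all_boot all_order all_algebra.
From mathcomp Require Import ring.
Import GRing.Theory Num.Theory.
Local Open Scope ring_scope.

Lemma dir_eq (a b : 'I_2) : (dir a == dir b) = (a == b).
Proof. by case: a => [[|[|]]//] ?; case: b => [[|[|]]//] ?. Qed.

Lemma edgeE (x y : Sigma) : edge x y -> exists a, y - x = dir a.
Proof. by case/orP=> /eqP h; [exists ord0|exists (@Ordinal 2 1 isT)]. Qed.

Lemma dir_sum (a b c d : 'I_2) : dir a + dir b != dir c + dir d ->
  (a == b) != (c == d).
Proof.
by case: a => [[|[|]]//] ?; case: b => [[|[|]]//] ?; case: c => [[|[|]]//] ?; case: d => [[|[|]]//] ?.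
Qed.

Lemma Fset (v : Sigma) : (edge 0 v && edge v (u1 + u2)) = (v == u1) || (v == u2).
Proof. case: v => [[[|[|]]//] ?] [[|[|]]//] ?. Qed.

Lemma picoefE (K : numFieldType) (Th1 Th2 : Sigma -> K) (x y z y' z' : Sigma)
  (a0 b0 c0 d0 : 'I_2) :
  y - x = dir a0 -> z - y = dir b0 -> y' - x = dir c0 -> z' - y' = dir d0 ->
  picoef Th1 Th2 (@antisym K) x y z y' z' =
  antisym K a0 b0 c0 d0 * Th Th1 Th2 a0 x * Th Th1 Th2 b0 y *
    (Th Th1 Th2 c0 x)^-1 * (Th Th1 Th2 d0 y')^-1.
Proof.
move=> ha hb hc hd.
rewrite /picoef !big_ord_recr !big_ord0 /= !add0r /zw /zwinv ha hb hc hd !dir_eq; clear ha hb hc hd.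
case: a0 => [[|[|]]//] ?; case: b0 => [[|[|]]//] ?; case: c0 => [[|[|]]//] ?; case: d0 => [[|[|]]//] ?;
rewrite /= ?mulr0 ?mul0r ?addr0 ?add0r //.
Qed.

Lemma antisym0 (K : numFieldType) (a b c d : 'I_2) :
  (a == b) != (c == d) -> antisym K a b c d = 0.
Proof.
rewrite /antisym.
by case: a => [[|[|]]//] ?; case: b => [[|[|]]//] ?; case: c => [[|[|]]//] ?; case: d => [[|[|]]//] ? _;
 rewrite /= subrr mulr0.
Qed.

Lemma dirdd (a : 'I_2) : dir a + dir a = 0.
Proof. by case: a => [[|[|]]//] ?; apply/eqP. Qed.

Lemma dircd (c d : 'I_2) : c != d -> dir c + dir d = u1 + u2.
Proof. by case: c => [[|[|]]//] ?; case: d => [[|[|]]//] ? _ //; rewrite addrC. Qed.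

Lemma diffE (x y z : Sigma) : z - x = (z - y) + (y - x).
Proof. by rewrite addrA subrK. Qed.

Lemma edge_tr (x y z : Sigma) : edge (y - x) (z - x) = edge y z.
Proof. by rewrite /edge opprB addrA subrK. Qed.

Lemma addKl (x v : Sigma) : x + v - x = v.
Proof. by rewrite addrC addKr. Qed.

Lemma Fw (x : Sigma) : F x (x + (u1 + u2)) = [set x + u1; x + u2].
Proof.
apply/setP => y; rewrite !inE -(edge_tr x x y) -(edge_tr x y) subrr addKl.
by rewrite Fset !subr_eq (addrC u1) (addrC u2).
Qed.


Lemma sumE (K : numFieldType) (Th1 Th2 : Sigma -> K)
  (H1 : forall x, Th1 x != 0) (H2 : forall x, Th2 x != 0) (x : Sigma) (c0 d0 : 'I_2) :
  c0 != d0 ->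
  exists k, k != 0 /\
  \sum_(y in F x (x + (u1 + u2))) picoef Th1 Th2 (@antisym K) x y (x + (u1 + u2))
      (x + dir c0) (x + (u1 + u2)) =
  (Th1 x * Th2 (x + u1) - Th2 x * Th1 (x + u2)) * k.
Proof.
move=> ncd.
have hd : x + (u1 + u2) - (x + dir c0) = dir d0.
  by rewrite -(@dircd c0 d0 ncd) addrA addKl.
rewrite Fw big_setU1 ?big_set1 /=; last first.
  by rewrite inE (inj_eq (addrI x)).
rewrite (@picoefE _ _ _ _ _ _ _ _ (ord0 : 'I_2) (@Ordinal 2 1 isT) c0 d0) ?addKl //; last first.
  by rewrite addrA addKl.
rewrite (@picoefE _ _ _ _ _ _ _ _ (@Ordinal 2 1 isT) (ord0 : 'I_2) c0 d0) ?addKl //; last first.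
  by rewrite (addrC u1) addrA addKl.
move: hd ncd; case: c0 => [[|[|]]//] ?; case: d0 => [[|[|]]//] ? hd _;
rewrite /antisym /Th /dir /=.
- exists (2^-1 * (Th1 x)^-1 * (Th2 (x + u1))^-1); split.
    by rewrite !mulf_neq0 ?invr_eq0 ?H1 ?H2 // pnatr_eq0.
  field; by rewrite ?H1 ?H2 ?pnatr_eq0.
- exists (- (2^-1 * (Th2 x)^-1 * (Th1 (x + u2))^-1)); split.
    by rewrite oppr_eq0 !mulf_neq0 ?invr_eq0 ?H1 ?H2 // pnatr_eq0.
  field; by rewrite ?H1 ?H2 ?pnatr_eq0.
Qed.

Lemma ord1 : (@Ordinal 2 0 isT) != (@Ordinal 2 1 isT). Proof. by []. Qed.

Theorem mainTheorem10 (K : numFieldType) (Th1 Th2 : Sigma -> K)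
  (H1 : forall x, Th1 x != 0) (H2 : forall x, Th2 x != 0) :
  (cond_i Th1 Th2 (@antisym K) /\ cond_ii Th1 Th2 (@antisym K)) <->
  (forall x : Sigma, Th1 x * R1 Th2 x = Th2 x * R2 Th1 x).
Proof.
split.
  case=> _ hii x; rewrite /R1 /R2.
  have [k [k0 e]] := @sumE K Th1 Th2 H1 H2 x _ _ ord1.
  have := hii x (x + (u1 + u2)).
  rewrite -(edge_tr x x) subrr addKl /=.
  have nx : x + (u1 + u2) != x by rewrite -subr_eq0 addKl.
  have mx : x + u1 \in F x (x + (u1 + u2)) by rewrite Fw !inE eqxx.
  move=> /(_ isT nx (x + u1) mx).
  rewrite [x + u1](_ : _ = x + dir (@Ordinal 2 0 isT)) // e => /eqP; rewrite mulf_eq0 (negbTE k0) orbF subr_eq0.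
  by move/eqP.
move=> E; split.
  move=> x z z' y y' nz; rewrite !inE => /andP [/edgeE [a0 ha] /edgeE [b0 hb]].
  move=> /andP [/edgeE [c0 hc] /edgeE [d0 hd]].
  rewrite (@picoefE _ _ _ _ _ _ _ _ a0 b0 c0 d0) // antisym0 ?mul0r //.
  apply: dir_sum; rewrite -ha -hb -hc -hd (addrC (y - x)) (addrC (y' - x)).
  by rewrite -!diffE; apply: contra nz => /eqP/addIr ->.
move=> x z ne nzx y'; rewrite inE => /andP [/edgeE [c0 hc] /edgeE [d0 hd]].
have ncd : c0 != d0.
  apply: contra nzx => /eqP ecd.
  by rewrite -subr_eq0 (diffE x y') hd hc ecd dirdd.
have hz : z = x + (u1 + u2).
  by rewrite -(@dircd c0 d0 ncd) -hc -hd (addrC (y' - x)) -diffE addrC subrK.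
have hy : y' = x + dir c0 by rewrite -hc addrC subrK.
rewrite hz hy.
have [k [k0 ->]] := @sumE K Th1 Th2 H1 H2 x _ _ ncd.
by have := E x; rewrite /R1 /R2 => ->; rewrite subrr mul0r.
Qed.
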